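(* For every $n\in\mathbb{Z}_{\ge0}$ the following identity of polynomials in $x$ holds: $$\sum_{j=0}^{n}x^{j}\prod_{m=1}^{n-j}\Big(x-\frac1m\Big)=(n+1)\prod_{m=2}^{n+1}\Big(x-\frac1m\Big),$$ where empty products equal $1$. *)

(* Defs.v *)
From mathcomp Require Import all_boot all_order all_algebra.

(* Main.v *)
Require Import Defs.
From mathcomp Require Import all_boot all_order all_algebra.
Import Num.Theory.
From mathcomp Require Import ring.
Import GRing.Theory.
Local Open Scope ring_scope.

Theorem mainTheorem7 (n : nat) :
  \sum_(0 <= j < n.+1)
     ('X ^+ j * \prod_(1 <= m < (n - j).+1) ('X - (m%:R)^-1%:P))
  = (n.+1)%:R%:P * \prod_(2 <= m < n.+2) ('X - (m%:R)^-1%:P) :> {poly rat}.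
Proof.
elim: n => [|n IH].
  by rewrite big_nat1 !big_geq // expr0 mulr1 mul1r.
rewrite [LHS]big_nat_recl //.
rewrite [X in _ + X](eq_bigr (fun j => 'X * ('X ^+ j * \prod_(1 <= m < (n - j).+1) ('X - (m%:R)^-1%:P)))); last first.
  by move=> j _; rewrite exprS -mulrA subSS.
rewrite -big_distrr /= IH subn0 expr0 mul1r.
rewrite (big_ltn (m := 1%N)) // [in RHS]big_nat_recr //=.
set Q := \prod_(2 <= m < n.+2) _.
rewrite invr1 mulrBr mulrBl.
have h : (n.+2)%:R%:P * ((n.+2)%:R^-1)%:P = 1 :> {poly rat}.
  by rewrite -polyCM mulfV // pnatr_eq0.
rewrite polyC1 mul1r mulrBr.
have -> : (n.+2%:R)%:P * (Q * (n.+2%:R^-1)%:P) = Q :> {poly rat}.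
  by rewrite mulrCA h mulr1.
rewrite -[(n.+2)%:R]natr1 polyCD polyC1.
clearbody Q; clear.
ring.
Qed.
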